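(* Fix $t\in\{1,\dots,M\}$ and let $z^*\in F(\mathcal{T}_t)$. Set $r_t=\min\{d_{sep}(z^*,C_t),\ d_{esc}(z^*,C_t)\}$. Then every $z\in B(z^*,r_t)$ satisfies $K_t(z)=K_t(z^* )$.
   Context: Fix reals $W,H>0$, integers $N\ge N_m\ge 2$, and widths $w_i>0$, heights $h_i>0$ for $1\le i\le N_m$. Points of $\mathbb{R}^{2N}$ are written $z=(x,y)$ with $x=(x_1,\dots,x_N)$, $y=(y_1,\dots,y_N)$. For $1\le i\le N_m$ let $B_i^x=\{z: 0\le x_i\le W-w_i\}$, $B_i^y=\{z: 0\le y_i\le H-h_i\}$; for $i\neq j$ let $B_{i,j}=B_i^x\cap B_i^y\cap B_j^x\cap B_j^y$, $O^x_{i,j}=\{z: x_i+w_i\le x_j\}$, $O^y_{i,j}=\{z: y_i+h_i\le y_j\}$. Define the closed convex sets $C_{i,j,\mathsf{L}}=O^x_{i,j}\cap B_{i,j}$, $C_{i,j,\mathsf{R}}=O^x_{j,i}\cap B_{i,j}$, $C_{i,j,\mathsf{B}}=O^y_{i,j}\cap B_{i,j}$, $C_{i,j,\mathsf{A}}=O^y_{j,i}\cap B_{i,j}$ (assumed nonempty) and $C_{i,j}=C_{i,j,\mathsf{L}}\cup C_{i,j,\mathsf{R}}\cup C_{i,j,\mathsf{B}}\cup C_{i,j,\mathsf{A}}$. Enumerate the pairs $1\le i<j\le N_m$ by $t=1,\dots,M$ and write $C_t=C_{i,j}$, $C_{t,k}=C_{i,j,k}$ for $k\in\{\mathsf{L},\mathsf{R},\mathsf{B},\mathsf{A}\}$.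 With $\|\cdot\|$ the Euclidean norm and $\mathrm{d}(z,C)=\inf_{c\in C}\|z-c\|$: $\mathcal{P}_t(z)=\{c\in C_t:\|z-c\|=\mathrm{d}(z,C_t)\}$ (set-valued metric projection), $P_{t,k}(z)$ is the unique nearest point of $C_{t,k}$ to $z$; for a fixed relaxation parameter $\lambda\in(0,2)$, $\mathcal{T}_t(z)=\{z+\lambda(p-z):p\in\mathcal{P}_t(z)\}$ and $F(\mathcal{T}_t)=\{z: z\in\mathcal{T}_t(z)\}$. Active indices: $K_t(z)=\{k\in\{\mathsf{L},\mathsf{R},\mathsf{B},\mathsf{A}\}: P_{t,k}(z)\in\mathcal{P}_t(z)\}$. Escaping distance: $d_{esc}(z^*,C_t)=\inf\{\|z-z^*\| : z\notin C_{t,k}\text{ for some }k\in K_t(z^* )\}$. Separating distance: $d_{sep}(z^*,C_t)=\min\{\mathrm{d}(z^*,C_{t,k}) : k\notin K_t(z^* )\}$. $B(z,r)=\{z':\|z'-z\|<r\}$ is the open ball (empty if $r=0$). *)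

(* Defs.v *)
(* R : realType, points of R^{2N} as pairs (x,y) of
   functions 'I_N -> R (coordinates 0..N-1 stand for the paper's 1..N). *)
From HB Require Import structures.
From mathcomp Require Import all_boot all_order all_algebra.
From mathcomp Require Import boolp classical_sets reals constructive_ereal ereal.
Set Implicit Arguments. Unset Strict Implicit. Unset Printing Implicit Defensive.
Import Order.TTheory GRing.Theory Num.Theory.
Local Open Scope classical_set_scope.
Local Open Scope ring_scope.

Section Packing.
Variables (R : realType) (N : nat).

Definition pt := (('I_N -> R) * ('I_N -> R))%type.

Definition edist (z c : pt) : R :=
  Num.sqrt (\sum_(l < N) ((z.1 l - c.1 l) ^+ 2 + (z.2 l - c.2 l) ^+ 2)).

Definition dset (z : pt) (C : set pt) : R := inf [set edist z c | c in C].

Definition Proj (C : set pt) (z : pt) : set pt :=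
  [set c | C c /\ edist z c = dset z C].

Variables (W H : R) (w h : 'I_N -> R).

Definition Bx (i : 'I_N) : set pt := [set z | 0 <= z.1 i <= W - w i].
Definition By (i : 'I_N) : set pt := [set z | 0 <= z.2 i <= H - h i].
Definition Bij (i j : 'I_N) : set pt := Bx i `&` By i `&` Bx j `&` By j.
Definition Ox (i j : 'I_N) : set pt := [set z | z.1 i + w i <= z.1 j].
Definition Oy (i j : 'I_N) : set pt := [set z | z.2 i + h i <= z.2 j].

Inductive side := sL | sR | sB | sA.
Definition sides : seq side := [:: sL; sR; sB; sA].

Definition Cijk (i j : 'I_N) (k : side) : set pt :=
  match k with
  | sL => Ox i j `&` Bij i j
  | sR => Ox j i `&` Bij i j
  | sB => Oy i j `&` Bij i j
  | sA => Oy j i `&` Bij i j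
  end.

Definition Cij (i j : 'I_N) : set pt :=
  Cijk i j sL `|` Cijk i j sR `|` Cijk i j sB `|` Cijk i j sA.

Definition is_Pk (i j : 'I_N) (k : side) (z p : pt) : Prop :=
  Cijk i j k p /\ edist z p = dset z (Cijk i j k).

Definition Kact (i j : 'I_N) (z : pt) : set side :=
  [set k | exists p, is_Pk i j k z p /\ Proj (Cij i j) z p].

Definition relax (lam : R) (z p : pt) : pt :=
  (fun l => z.1 l + lam * (p.1 l - z.1 l), fun l => z.2 l + lam * (p.2 l - z.2 l)).

Definition fixT (lam : R) (i j : 'I_N) (z : pt) : Prop :=
  exists2 p, Proj (Cij i j) z p & z = relax lam z p.

Definition d_esc (i j : 'I_N) (zs : pt) : R :=
  inf [set edist z zs | z in [set z | exists2 k, Kact i j zs k & ~ Cijk i j k z]].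

(* separating distance (min over the empty family is +oo) *)
Definition d_sep (i j : 'I_N) (zs : pt) : \bar R :=
  \big[mine/+oo%E]_(k <- sides | `[< ~ Kact i j zs k >]) (dset zs (Cijk i j k))%:E.

Definition r_t (i j : 'I_N) (zs : pt) : \bar R :=
  mine (d_sep i j zs) (d_esc i j zs)%:E.

End Packing.

(* Main.v *)
Require Import Defs.
From HB Require Import structures.
From mathcomp Require Import all_boot all_order all_algebra.
From mathcomp Require Import boolp classical_sets reals constructive_ereal ereal.
Import Order.TTheory GRing.Theory Num.Theory.
Local Open Scope classical_set_scope.
Local Open Scope ring_scope.

Set Implicit Arguments. Unset Strict Implicit.
Section Aux.
Variables (R : realType) (N : nat) (W H : R) (w h : 'I_N -> R).

Lemma edist_ge0 (z c : pt R N) : 0 <= edist z c.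
Proof. exact: sqrtr_ge0. Qed.

Lemma edist_sym (z c : pt R N) : edist z c = edist c z.
Proof.
rewrite /edist; congr Num.sqrt; apply: eq_bigr => l _.
by rewrite -(sqrrN (z.1 l - c.1 l)) -(sqrrN (z.2 l - c.2 l)) !opprB.
Qed.

Lemma edist_xx (z : pt R N) : edist z z = 0.
Proof.
rewrite /edist big1 ?sqrtr0 // => l _; by rewrite !subrr expr0n /= addr0.
Qed.

Lemma edist_eq0 (z c : pt R N) : edist z c = 0 -> z = c.
Proof.
move=> /eqP; rewrite sqrtr_eq0 => hle.
have h0 : \sum_(l < N) ((z.1 l - c.1 l) ^+ 2 + (z.2 l - c.2 l) ^+ 2) = 0.
  apply/eqP; rewrite eq_le hle /=; apply: sumr_ge0 => l _.
  by rewrite addr_ge0 // sqr_ge0.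
have hl : forall l, (z.1 l - c.1 l) ^+ 2 + (z.2 l - c.2 l) ^+ 2 = 0.
  move=> l; apply/eqP.
  move/eqP: h0; rewrite psumr_eq0; last by move=> k _; rewrite addr_ge0 // sqr_ge0.
  by move/allP => /(_ l (mem_index_enum _)).
clear h0 hle; case: z c hl => [z1 z2] [c1 c2] /= hl.
have e1 : z1 = c1.
  apply: funext => l; have := hl l; move/eqP; rewrite paddr_eq0 ?sqr_ge0 //.
  by case/andP; rewrite sqrf_eq0 subr_eq0 => /eqP.
have e2 : z2 = c2.
  apply: funext => l; have := hl l; move/eqP; rewrite paddr_eq0 ?sqr_ge0 //.
  by case/andP=> _; rewrite sqrf_eq0 subr_eq0 => /eqP.
by rewrite e1 e2.
Qed.

Lemma dset_le (z c : pt R N) (C : set (pt R N)) : C c -> dset z C <= edist z c.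
Proof.
move=> Cc; apply: ge_inf; last by exists c.
by exists 0 => _ [d _ <-]; exact: edist_ge0.
Qed.

Lemma dset_ge0 (z : pt R N) (C : set (pt R N)) : C !=set0 -> 0 <= dset z C.
Proof.
move=> [c Cc]; apply: lb_le_inf; first by exists (edist z c), c.
by move=> _ [d _ <-]; exact: edist_ge0.
Qed.

Lemma dset_self (z : pt R N) (C : set (pt R N)) : C z -> dset z C = 0.
Proof.
move=> Cz; apply/eqP; rewrite eq_le dset_ge0; last by exists z.
by rewrite andbT -(edist_xx z) dset_le.
Qed.

Lemma Ck_C (i j : 'I_N) k (y : pt R N) : Cijk W H w h i j k y -> Cij W H w h i j y.
Proof. by rewrite /Cij; case: k => Hy; [left;left;left|left;left;right|left;right|right]. Qed.

Lemma lemA (i j : 'I_N) k (y : pt R N) : Cijk W H w h i j k y -> Kact W H w h i j y k.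
Proof.
move=> Hy; have Cy := @Ck_C i j k y Hy; exists y; split; split => //; by rewrite edist_xx dset_self.
Qed.

Lemma lemB (i j : 'I_N) k (y : pt R N) :
  Kact W H w h i j y k -> Cij W H w h i j y -> Cijk W H w h i j k y.
Proof.
move=> [p [[Cp _] [_ e]]] Cy; rewrite dset_self // in e.
by rewrite (edist_eq0 e).
Qed.

End Aux.
Unset Implicit Arguments.

Theorem mainTheorem2 (R : realType) (W H : R) (N Nm : nat)
  (w h : 'I_N -> R) (lam : R) (i j : 'I_N) (zs : pt R N) :
  0 < W -> 0 < H -> (2 <= Nm)%N -> (Nm <= N)%N ->
  (forall l : 'I_N, (l < Nm)%N -> 0 < w l /\ 0 < h l) ->
  (forall (a b : 'I_N) (k : side), (a < Nm)%N -> (b < Nm)%N -> a != b ->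
      Cijk W H w h a b k !=set0) ->
  0 < lam < 2 ->
  (i < j)%N -> (j < Nm)%N ->
  fixT W H w h lam i j zs ->
  forall z : pt R N, ((edist z zs)%:E < r_t W H w h i j zs)%E ->
    Kact W H w h i j z = Kact W H w h i j zs.
Proof.
move=> _ _ _ _ _ _ /andP[lam0 _] _ _ [p Pp ezs] z.
rewrite /r_t lt_min => /andP[hsep hesc].
rewrite lte_fin in hesc.
have pzs : p = zs.
  move: ezs; clear -lam0; case: p => [p1 p2]; case: zs => [s1 s2] /= [e1 e2].
  have E : forall (a b : R), a = a + lam * (b - a) -> b = a.
    move=> a b e; have : lam * (b - a) = 0 by apply: (@addrI _ a); rewrite addr0 -e.
    by move/eqP; rewrite mulf_eq0 (gt_eqF lam0) /= subr_eq0 => /eqP.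
  congr pair; apply: funext => l; apply: E.
  - exact: (congr1 (fun f => f l) e1).
  - exact: (congr1 (fun f => f l) e2).
subst p; case: Pp => Czs _.
have esc : forall k, Kact W H w h i j zs k -> Cijk W H w h i j k z.
  move=> k Kk; apply: contrapT => nC.
  have : d_esc W H w h i j zs <= edist z zs.
    apply: ge_inf; last by exists z => //; exists k.
    by exists 0 => _ [d _ <-]; exact: edist_ge0.
  by rewrite leNgt hesc.
have [k0 Ck0] : exists k, Cijk W H w h i j k zs.
  by case: Czs => [[[?|?]|?]|?]; [exists sL|exists sR|exists sB|exists sA].
have Cz : Cij W H w h i j z := Ck_C (esc k0 (lemA Ck0)).
have sep : forall k, ~ Kact W H w h i j zs k ->
    ((edist z zs)%:E < (dset zs (Cijk W H w h i j k))%:E)%E.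
  move=> k nK; apply: (lt_le_trans hsep).
  have nKb : `[< ~ Kact W H w h i j zs k >] by apply/asboolP.
  rewrite /d_sep /sides.
  case: k nK nKb => _ nKb; rewrite !big_cons big_nil ?nKb /=.
  - by rewrite ge_min lexx.
  - case: ifP => _; last by rewrite ge_min lexx.
    by rewrite ge_min ge_min lexx orbT.
  - do 2 (case: ifP => _); rewrite ?ge_min ?lexx ?orbT //.
  - do 3 (case: ifP => _); rewrite ?ge_min ?lexx ?orbT //.
apply/seteqP; split => k.
- move=> Kz; apply: contrapT => nK.
  have := sep k nK; rewrite lte_fin.
  have := dset_le zs (lemB Kz Cz); rewrite edist_sym.
  by move=> le lt; move: (le_lt_trans le lt); rewrite ltxx.
- by move=> Kk; apply: lemA; apply: esc.
Qed.
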